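(* Let $t$ be the Thue-Morse word, and let $i>0$ and $k>0$ be integers such that $t(i..i+k]$ is a palindrome, and suppose there is $m\in\{1,2,3\}$ with $i\equiv m\pmod 4$ and $i+k\equiv 4-m\pmod 4$. Then $t(i-1..i+k+1]$ is a palindrome, and $t(i+1..i+k-1]$ is a palindrome.
   Context: The Thue-Morse word $t=t[1]t[2]\cdots=abbabaabbaababba\cdots$ is the fixed point starting with $a$ of the morphism $\tau: a\mapsto abba,\ b\mapsto baab$. For $0\le i\le j$, $t(i..j]$ denotes the factor $t[i+1]t[i+2]\cdots t[j]$ (empty if $i=j$). A palindrome is a word $p=p[1]\cdots p[n]$ with $p[i]=p[n-i+1]$ for all $i$ (the empty word is a palindrome). *)

(* Defs.v *)
From HB Require Import structures.
From mathcomp Require Import all_boot.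
Set Implicit Arguments. Unset Strict Implicit. Unset Printing Implicit Defensive.

Inductive letter := a | b.
Definition letter_eqb (x y : letter) : bool :=
  match x, y with a, a | b, b => true | _, _ => false end.
Lemma letter_eqP : Equality.axiom letter_eqb.
Proof. by case; case; constructor. Qed.
HB.instance Definition _ := hasDecEq.Build letter letter_eqP.

Definition tau1 (x : letter) : seq letter :=
  match x with a => [:: a; b; b; a] | b => [:: b; a; a; b] end.
Definition tau (w : seq letter) : seq letter := flatten (map tau1 w).

Definition tm_prefix (n : nat) : seq letter := iter n tau [:: a].

(* t[n], 1-indexed: the n-th letter of the fixed point, read off tau^n(a)
   (which has length 4^n >= n). *)
Definition t (n : nat) : letter := nth a (tm_prefix n) n.-1.

(* t(i..j] = t[i+1] ... t[j] (empty if j <= i). *)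
Definition factor (i j : nat) : seq letter := [seq t k | k <- iota i.+1 (j - i)].

Definition palindrome (w : seq letter) : Prop := rev w = w.

(* Main.v *)
Require Import Defs.
From mathcomp Require Import all_boot.
From mathcomp Require Import zify.

Lemma tau_cons x w : tau (x :: w) = tau1 x ++ tau w.
Proof. by []. Qed.

Lemma size_tau1 x : size (tau1 x) = 4.
Proof. by case: x. Qed.

Lemma size_tau w : size (tau w) = 4 * size w.
Proof.
elim: w => [|x w IH] //; rewrite tau_cons size_cat size_tau1 IH /=; lia.
Qed.

Lemma tau_cat u v : tau (u ++ v) = tau u ++ tau v.
Proof. by rewrite /tau map_cat flatten_cat. Qed.

Lemma tm_S n : tm_prefix n.+1 = tau (tm_prefix n).
Proof. by []. Qed.

Lemma size_tm n : size (tm_prefix n) = 4 ^ n.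
Proof. elim: n => [|n IH] //; rewrite tm_S size_tau IH expnS //. Qed.

Lemma tm_ext n : exists s, tm_prefix n.+1 = tm_prefix n ++ s.
Proof.
elim: n => [|n IH]; first by (exists [:: b; b; a]).

case: IH => s IH.
exists (tau s); by rewrite [LHS]tm_S [in LHS]IH tau_cat.
Qed.

Lemma tm_nth n d p : p < 4 ^ n ->
  nth a (tm_prefix (n + d)) p = nth a (tm_prefix n) p.
Proof.
move=> Hp; elim: d => [|d IH]; first by rewrite addn0.
have [s Hs] := tm_ext (n + d).
rewrite addnS Hs nth_cat size_tm.
have -> : p < 4 ^ (n + d).
  apply: (leq_trans Hp); apply: leq_pexp2l => //; lia.
exact: IH.
Qed.

Lemma t_nth N p : p < 4 ^ N -> t p.+1 = nth a (tm_prefix N) p.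
Proof.
move=> Hp; rewrite /t /=.
have H1 : p < 4 ^ p.+1 by apply: (ltn_trans (ltn_expl p (isT : 1 < 4))); rewrite ltn_exp2l.
by rewrite -(@tm_nth p.+1 N p H1) -(@tm_nth N p.+1 p Hp) addnC.
Qed.

Lemma nth_tau w r j : r < size w -> j < 4 ->
  nth a (tau w) (4 * r + j) = nth a (tau1 (nth a w r)) j.
Proof.
elim: w r => [|x w IH] r //= Hr Hj.
rewrite tau_cons nth_cat size_tau1.
case: r Hr => [|r] Hr.
  by rewrite muln0 add0n Hj.
have -> : (4 * r.+1 + j < 4) = false by lia.
have -> : 4 * r.+1 + j - 4 = 4 * r + j by lia.
exact: IH.
Qed.

Lemma tblock q j : j < 4 -> t (4 * q + j).+1 = nth a (tau1 (t q.+1)) j.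
Proof.
move=> Hj.
have Hq := ltn_expl q (isT : 1 < 4).
rewrite (t_nth q.+2); last by rewrite !expnS; lia.
rewrite tm_S nth_tau //; last by rewrite size_tm expnS; lia.
Qed.

Lemma t_odd n : odd n -> t n.+1 != t n.
Proof.
move=> Hn.
have Hn2 : n %% 2 = 1 by rewrite modn2 Hn.
have [q [j [Hj Hnq]]] : exists q j, j < 4 /\ n = 4 * q + j + 1.
  exists (n.-1 %/ 4), (n.-1 %% 4); split; first by rewrite ltn_mod.
  have := divn_eq n.-1 4; case: n Hn Hn2 => //= n _ _; lia.
subst n.
clear Hn; move: Hn2; case: j Hj => [|[|[|[|j]]]] // _ Hn2; try lia.
- have h0 := tblock q 0 isT; have h1 := tblock q 1 isT.
  rewrite addn0 in h0.
  have -> : (4 * q + 0 + 1).+1 = (4 * q + 1).+1 by lia.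
  rewrite h1 addn0 addn1 h0; by case: (t q.+1).
- have h0 := tblock q 2 isT; have h1 := tblock q 3 isT.
  have -> : (4 * q + 2 + 1).+1 = (4 * q + 3).+1 by lia.
  rewrite h1 addn1 h0; by case: (t q.+1).
Qed.

Lemma t_two n : n %% 4 = 2 -> t n.+1 = t n.
Proof.
move=> Hn.
have -> : n = 4 * (n %/ 4) + 1 + 1 by have := divn_eq n 4; lia.
have h0 := tblock (n %/ 4) 1 isT; have h1 := tblock (n %/ 4) 2 isT.
have -> : (4 * (n %/ 4) + 1 + 1).+1 = (4 * (n %/ 4) + 2).+1 by lia.
rewrite addn1 h0 h1; by case: (t _).
Qed.


Lemma pal_map (f : nat -> letter) s n :
  palindrome [seq f q | q <- iota s n] <->
  (forall j, j < n -> f (s + j) = f (s + (n - 1 - j))).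
Proof.
rewrite /palindrome; split.
- move=> H j Hj.
  have := congr1 (fun w => nth a w j) H.
  rewrite nth_rev size_map size_iota // !(nth_map 0) ?size_iota ?nth_iota //; try lia.
  have -> : n - j.+1 = n - 1 - j by lia.
  by move=> ->.
- move=> H; apply: (eq_from_nth (x0 := a)); first by rewrite size_rev.
  move=> j; rewrite size_rev size_map size_iota => Hj.
  rewrite nth_rev size_map size_iota // !(nth_map 0) ?size_iota ?nth_iota //; try lia.
  have -> : n - j.+1 = n - 1 - j by lia.
  rewrite H; last by lia.
  congr (f _); lia.
Qed.

Lemma odd_of n : n %% 2 = 1 -> odd n.
Proof. by rewrite modn2; case: (odd n). Qed.

Lemma letter3 (x y z w : letter) : y != x -> w != z -> y = z -> x = w.
Proof. by case: x; case: y; case: z; case: w. Qed.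

Theorem proposition6 (i k : nat) :
  0 < i -> 0 < k ->
  palindrome (factor i (i + k)) ->
  (exists2 m : nat, m \in [:: 1; 2; 3] &
     (i = m %[mod 4]) /\ (i + k = 4 - m %[mod 4])) ->
  palindrome (factor (i - 1) (i + k + 1)) /\
  palindrome (factor (i + 1) (i + k - 1)).
Proof.
move=> Hi Hk Hp [m Hm [H1 H2]].
move: Hp; rewrite /factor addKn => /pal_map Hp.
have H0 : t i.+1 = t (i + k).
  have := Hp 0 Hk; rewrite addn0 => ->; congr t; lia.
have Key : t i = t (i + k).+1.
  move: Hm; rewrite !inE => /orP [/eqP Em|/orP [/eqP Em|/eqP Em]]; subst m.
  - have Oi : odd i by apply: odd_of; lia.
    have Ok : odd (i + k) by apply: odd_of; lia.
    exact: (@letter3 _ _ _ _ (t_odd i Oi) (t_odd _ Ok) H0).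
  - rewrite t_two; last by lia.
    rewrite -t_two; last by lia.
    exact: H0.
  - have Oi : odd i by apply: odd_of; lia.
    have Ok : odd (i + k) by apply: odd_of; lia.
    exact: (@letter3 _ _ _ _ (t_odd i Oi) (t_odd _ Ok) H0).
split.
- have -> : (i - 1).+1 = i by lia.
  have -> : i + k + 1 - (i - 1) = k + 2 by lia.
  apply/pal_map => j Hj.
  case: j Hj => [|j] Hj.
    rewrite addn0 Key; congr t; lia.
  have [Ej|Ej] : j = k \/ j < k by lia.
    subst j; have -> : i + (k + 2 - 1 - k.+1) = i by lia.
    rewrite Key; congr t; lia.
  have := Hp j Ej.
  have -> : i.+1 + j = i + j.+1 by lia.
  move=> ->; congr t; lia.
- have -> : i + k - 1 - (i + 1) = k - 2 by lia.
  apply/pal_map => j Hj.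
  have := Hp j.+1 ltac:(lia).
  have -> : i.+1 + j.+1 = (i + 1).+1 + j by lia.
  move=> ->; congr t; lia.
Qed.
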